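(* Let $P=(T;U,V)$ be a 3M-DAP with $t=u=v=2$, and let $\lambda = x_u - x_v$. Then there exists a feasible solution of $P$ all of whose entries lie in the open interval $\left(\frac{x_t+\lambda}{2}, \frac{x_t-\lambda}{2}\right)$; in particular $f(P) > (x_t+\lambda)/2$.
   Context: A three-matrix division and assignment problem (3M-DAP) $P=(T;U,V)$ is specified by integers $t,u,v$ (numbers of columns), integers $s_t, s_u, s_v$ (numbers of rows) and rationals $x_t, x_u, x_v$ (required row sums), subject to: $t \ge 2$, $u \ge 2$, $v \ge 1$; if $v = 1$ then $v s_v \le (t-2)s_t$; $s_t > 0$, $s_u > 0$, $s_v \ge 0$; $s_u u + s_v v = s_t t$; $s_u x_u + s_v x_v = s_t x_t$; and $x_u/u < x_v/v$. A feasible solution assigns real values to the entries of an $s_t\times t$ matrix $T$, an $s_u \times u$ matrix $U$ and an $s_v \times v$ matrix $V$ so that every row of $T$, $U$, $V$ sums to $x_t$, $x_u$, $x_v$ respectively, and the multiset of entries of $T$ equals the multiset union of the entries of $U$ and $V$. $f(P)$ is the maximum, over feasible solutions, of the smallest entry of $T$. *)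

(* Defs.v *)
From HB Require Import structures.
From mathcomp Require Import all_boot all_order all_algebra.
From mathcomp Require Import reals.
Set Implicit Arguments. Unset Strict Implicit. Unset Printing Implicit Defensive.
Import Order.TTheory GRing.Theory Num.Theory.
Local Open Scope ring_scope.

(* A three-matrix division and assignment problem P = (T;U,V):
   column counts t u v, row counts st su sv, row sums xt xu xv. *)
Definition is3MDAP (t u v st su sv : nat) (xt xu xv : rat) : Prop :=
  [/\ (2 <= t)%N /\ (2 <= u)%N /\ (1 <= v)%N,
      (v = 1%N -> (v * sv <= (t - 2) * st)%N),
      (0 < st)%N /\ (0 < su)%N,
      (su * u + sv * v = st * t)%N /\
      su%:R * xu + sv%:R * xv = st%:R * xt
    & xu / u%:R < xv / v%:R].

Definition entries (R : Type) (m n : nat) (M : 'M[R]_(m, n)) : seq R :=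
  [seq M i j | i <- enum 'I_m, j <- enum 'I_n].

Definition feasible (R : realType) (t u v st su sv : nat) (xt xu xv : rat)
  (T : 'M[R]_(st, t)) (U : 'M[R]_(su, u)) (V : 'M[R]_(sv, v)) : Prop :=
  [/\ forall i, \sum_j T i j = ratr xt,
      forall i, \sum_j U i j = ratr xu,
      forall i, \sum_j V i j = ratr xv
    & perm_eq (entries T) (entries U ++ entries V)].

(* Main.v *)
Require Import Defs.
From HB Require Import structures.
From mathcomp Require Import all_boot all_order all_algebra.
From mathcomp Require Import reals.
From mathcomp Require Import zify ring lra.
Import Order.TTheory GRing.Theory Num.Theory.
Local Open Scope ring_scope.

Lemma entries_mk (T : Type) m (f1 f2 : nat -> T) :
  entries (\matrix_(i < m, j < 2) (if (j : nat) == 0%N then f1 i else f2 i)) =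
  flatten [seq [:: f1 i; f2 i] | i <- iota 0 m].
Proof.
rewrite /entries -val_enum_ord -map_comp.
elim: (enum 'I_m) => [//|i s IH] /=.
rewrite IH enum_ordSl /= enum_ordSl enum_ord0 /= !mxE /=.
by [].
Qed.

Lemma flatten_perm (T : eqType) (s : seq nat) (f1 f2 : nat -> T) :
  perm_eq (flatten [seq [:: f1 i; f2 i] | i <- s]) (map f1 s ++ map f2 s).
Proof.
elim: s => [//|i s IH] /=.
rewrite perm_cons.
rewrite -(perm_cons (f2 i)) in IH.
apply: perm_trans IH _.
by rewrite -cat1s perm_catCA.
Qed.

Lemma rev_perm (m k : nat) :
  perm_eq [seq m + (k.-1 - i)%N | i <- iota 0 k]%N (iota m k).
Proof.
apply: uniq_perm; last 1 first.
- move=> x; apply/mapP/idP.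
  + by case=> i; rewrite !mem_iota => Hi ->; lia.
  + rewrite mem_iota => Hx; exists (k.-1 - (x - m))%N; rewrite ?mem_iota; lia.
- rewrite map_inj_in_uniq ?iota_uniq // => a b; rewrite !mem_iota; lia.
- exact: iota_uniq.
Qed.

Lemma entries_perm (T : eqType) (Y : nat -> T) m k :
  perm_eq (entries (\matrix_(i < k, j < 2)
     (if (j : nat) == 0%N then Y (m + i)%N else Y (m + (k.-1 - i))%N)))
   (map Y (iota m k ++ iota m k)).
Proof.
rewrite (entries_mk _ _ (fun i => Y (m + i)%N) (fun i => Y (m + (k.-1 - i))%N)).
apply: perm_trans (flatten_perm _ _ _ _) _.
rewrite map_cat; apply: perm_cat.
  by rewrite (map_comp Y (addn m)) -iotaDl addn0.
rewrite (map_comp Y (fun i => m + (k.-1 - i))%N); apply: perm_map.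
exact: rev_perm.
Qed.

Lemma natsum_rat m k i : (0 < k)%N -> (i < k)%N ->
  (((m + i) + (m + (k.-1 - i)))%N%:R : rat) = 2 * m%:R + k%:R - 1.
Proof.
move=> Hk Hi.
rewrite (_ : (m + i + (m + (k.-1 - i)))%N = (m + m + k.-1)%N); last by lia.
have Hk1 : (k%:R : rat) = k.-1%:R + 1 by rewrite -{1}(prednK Hk) -addn1 natrD.
rewrite !natrD Hk1; ring.
Qed.

Theorem lemma6 (R : realType) (st su sv : nat) (xt xu xv : rat) :
  is3MDAP 2 2 2 st su sv xt xu xv ->
  let lam := xu - xv in
  exists (T : 'M[R]_(st, 2)) (U : 'M[R]_(su, 2)) (V : 'M[R]_(sv, 2)),
    feasible xt xu xv T U V /\
    (forall y, y \in entries T ++ entries U ++ entries V ->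
       ratr ((xt + lam) / 2) < y < ratr ((xt - lam) / 2)).
Proof.
move=> [[_ [_ _]] _ [Hst Hsu] [Hn Hx] Hlt] lam.
have Est : st = (su + sv)%N by lia.
pose N : rat := st%:R.
pose yq (k : nat) : rat := xt / 2 + (k%:R - (N - 1) / 2) * ((xv - xu) / N).
pose Y (k : nat) : R := ratr (yq k).
have yq_sum : forall a b, yq a + yq b = xt + ((a + b)%N%:R - (N - 1)) * ((xv - xu) / N).
  move=> a b; rewrite /yq natrD /N; field; rewrite pnatr_eq0; lia.
pose T := \matrix_(i < st, j < 2)
     (if (j : nat) == 0%N then Y (0 + i)%N else Y (0 + (st.-1 - i))%N).
pose U := \matrix_(i < su, j < 2)
     (if (j : nat) == 0%N then Y (0 + i)%N else Y (0 + (su.-1 - i))%N).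
pose V := \matrix_(i < sv, j < 2)
     (if (j : nat) == 0%N then Y (su + i)%N else Y (su + (sv.-1 - i))%N).
have HP : perm_eq (entries T) (entries U ++ entries V).
  apply: perm_trans (entries_perm _ Y 0 st) _.
  rewrite perm_sym.
  apply: perm_trans (perm_cat (entries_perm _ Y 0 su) (entries_perm _ Y su sv)) _.
  rewrite -map_cat; apply: perm_map.
  rewrite Est iotaD add0n -!catA perm_cat2l perm_catCA.
  by [].
have HN0 : N != 0 by rewrite /N pnatr_eq0; lia.
have HNs : N = su%:R + sv%:R by rewrite /N Est natrD.
have Hxt : xt = (su%:R * xu + sv%:R * xv) / N.
  rewrite Hx /N; field; rewrite pnatr_eq0; lia.
exists T, U, V; split.
- split.
  + move=> i; rewrite !big_ord_recl big_ord0 !mxE /= addr0 -rmorphD.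
    congr ratr; rewrite yq_sum (natsum_rat _ _ _ Hst (ltn_ord i)).
    rewrite /N; field; rewrite pnatr_eq0; lia.
  + move=> i; rewrite !big_ord_recl big_ord0 !mxE /= addr0 -rmorphD.
    congr ratr; rewrite yq_sum (natsum_rat _ _ _ Hsu (ltn_ord i)).
    rewrite Hxt HNs; field; rewrite -natrD pnatr_eq0; lia.
  + move=> i; rewrite !big_ord_recl big_ord0 !mxE /= addr0 -rmorphD.
    have Hv : (0 < sv)%N by case: i; lia.
    congr ratr; rewrite yq_sum (natsum_rat _ _ _ Hv (ltn_ord i)).
    rewrite Hxt HNs; field; rewrite -natrD pnatr_eq0; lia.
  + exact: HP.
- have HP2 : perm_eq (entries T ++ entries U ++ entries V) (entries T ++ entries T).
    by rewrite perm_cat2l perm_sym.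
  move=> y Hy.
  have Hy2 : y \in entries T ++ entries T by rewrite -(perm_mem HP2).
  have Hy3 : y \in map Y (iota 0 st ++ iota 0 st).
    rewrite -(perm_mem (entries_perm _ Y 0 st)).
    by move: Hy2; rewrite (mem_cat y (entries T) (entries T)) orbb.
  move: Hy3; case/mapP => k; rewrite mem_cat orbb mem_iota add0n => /andP [_ Hk] ->.
  rewrite /Y !ltr_rat /yq /lam.
  have Hxv : xu < xv by lra.
  pose w := (xv - xu) / N.
  have Hw : 0 < w by rewrite /w divr_gt0 // ?subr_gt0 // /N ltr0n.
  have Hd : xu - xv = - (N * w) by rewrite /w mulrC divfK // opprB.
  rewrite -/w Hd.
  have K0 : 0 <= (k%:R : rat) * w by rewrite mulr_ge0 // ltW.
  have K1 : 0 <= (N - 1 - k%:R) * w.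
    apply: mulr_ge0; last exact: ltW.
    rewrite subr_ge0 lerBrDr /N natr1 ler_nat; lia.
  apply/andP; split; nra.
Qed.
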